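(* Let $p^*\in(0,1)$ be the threshold belief of the insurance problem (the unique $p^*$ such that not insuring is optimal for $p<p^*$, the insuree is indifferent between not insuring and insuring at a positive indemnity at $p^*$, and insuring at a positive indemnity $\hat I(p)$ is strictly optimal for $p>p^*$). For $p\in(0,1)$ and small $\varepsilon>0$ define $\mathrm{VoI}(\varepsilon)=\tfrac12 v(p+\varepsilon)+\tfrac12 v(p-\varepsilon)-v(p)$. Then: (1) if $p<p^*$, $\mathrm{VoI}(\varepsilon)=0$ for all sufficiently small $\varepsilon>0$; (2) if $p=p^*$, there is a constant $C^*>0$ with $\mathrm{VoI}(\varepsilon)\sim C^*\varepsilon$ as $\varepsilon\to0$; (3) if $p>p^*$, there is a constant $C(p)>0$ with $\mathrm{VoI}(\varepsilon)\sim C(p)\varepsilon^2$ as $\varepsilon\to0$.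
   Context: Insurance model with parameters $\alpha\in(0,1)$, $f>0$, $\varpi>0$, $R>0$: premium $P(I)=\alpha I+f$, utility $u(w)=1-e^{-Rw}$; for probability of loss $q\in[0,1]$, $U_0(q)=(1-q)(1-e^{-R\varpi})$ (no insurance) and $U(q,I)=1-qe^{-R(I-P(I))}-(1-q)e^{-R(\varpi-P(I))}$ (insurance with indemnity $I\ge0$). The value function is $v(q)=\max\{U_0(q),\sup_{I\ge0}U(q,I)\}$. Here $f(\varepsilon)\sim g(\varepsilon)$ means $f(\varepsilon)/g(\varepsilon)\to1$. *)

(* Defs.v *)
From Stdlib Require Import Reals Lra.
Open Scope R_scope.

Definition premium (alpha f I : R) : R := alpha * I + f.

Definition util (Ra w : R) : R := 1 - exp (- (Ra * w)).

Definition U0 (w Ra q : R) : R := (1 - q) * (1 - exp (- (Ra * w))).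

Definition Uins (alpha f w Ra q I : R) : R :=
  1 - q * exp (- (Ra * (I - premium alpha f I)))
    - (1 - q) * exp (- (Ra * (w - premium alpha f I))).

Definition attainable (alpha f w Ra q : R) : R -> Prop :=
  fun y => y = U0 w Ra q \/ exists I, 0 <= I /\ y = Uins alpha f w Ra q I.

Definition is_value_function (alpha f w Ra : R) (v : R -> R) : Prop :=
  forall q, 0 <= q <= 1 -> is_lub (attainable alpha f w Ra q) (v q).

Definition is_threshold (alpha f w Ra pstar : R) : Prop :=
  0 < pstar < 1 /\
  (forall q, 0 <= q < pstar -> forall I, 0 <= I -> Uins alpha f w Ra q I <= U0 w Ra q) /\
  (exists I, 0 < I /\ Uins alpha f w Ra pstar I = U0 w Ra pstar /\
     forall J, 0 <= J -> Uins alpha f w Ra pstar J <= U0 w Ra pstar) /\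
  (forall q, pstar < q < 1 -> exists Ihat, 0 < Ihat /\
     U0 w Ra q < Uins alpha f w Ra q Ihat /\
     forall J, 0 <= J -> Uins alpha f w Ra q J <= Uins alpha f w Ra q Ihat).

Definition VoI (v : R -> R) (p eps : R) : R :=
  / 2 * v (p + eps) + / 2 * v (p - eps) - v p.

Definition asymp_equiv_0plus (g h : R -> R) : Prop :=
  forall eta, 0 < eta -> exists delta, 0 < delta /\
    forall eps, 0 < eps < delta -> Rabs (g eps / h eps - 1) < eta.

(* Main.v *)
Require Import Defs.
From Stdlib Require Import Reals Lra Classical.
From Coquelicot Require Import Coquelicot.
Open Scope R_scope.

Lemma deriv_cont f x l : is_derive f x l -> continuity_pt f x.
Proof.
  intro H. apply continuity_pt_filterlim. apply (@ex_derive_continuous R_AbsRing R_NormedModule). exists l. exact H.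
Qed.

Lemma second_diff (phi phi1 phi2 : R -> R) (p r : R) : 0 < r ->
  (forall t, p - r < t < p + r -> is_derive phi t (phi1 t)) ->
  (forall t, p - r < t < p + r -> is_derive phi1 t (phi2 t)) ->
  (forall e, 0 < e -> exists d, 0 < d /\ forall t, Rabs (t - p) < d -> Rabs (phi2 t - phi2 p) < e) ->
  forall eta, 0 < eta -> exists delta, 0 < delta /\ forall eps, 0 < eps < delta ->
    Rabs (phi (p + eps) + phi (p - eps) - 2 * phi p - phi2 p * eps ^ 2) <= eta * eps ^ 2.
Proof.
  intros Hr H1 H2 Hc eta Heta.
  destruct (Hc (eta/2)) as [d1 [Hd1 Hd1']]; [lra|].
  exists (Rmin r d1). split; [apply Rmin_pos; lra|].
  intros eps [He1 He2].
  assert (Er : eps < r) by (eapply Rlt_le_trans; [exact He2| apply Rmin_l]).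
  assert (Ed : eps < d1) by (eapply Rlt_le_trans; [exact He2| apply Rmin_r]).
  set (rho := fun t => phi (p + t) + phi (p - t) - 2 * phi p - phi2 p * t ^ 2).
  set (rho1 := fun t => phi1 (p + t) - phi1 (p - t) - 2 * phi2 p * t).
  assert (Dr : forall t, - r < t < r -> is_derive rho t (rho1 t)).
  { intros t Ht. unfold rho, rho1.
    assert (Ha := H1 (p + t) ltac:(lra)). assert (Hb := H1 (p - t) ltac:(lra)).
    auto_derive.
    - split; [exists (phi1 (p+t)); exact Ha|]. split; [exists (phi1 (p-t)); exact Hb|]. easy.
    - change (fun x : R => phi x) with phi. replace (p + - t) with (p - t) by ring.
      rewrite (is_derive_unique _ _ _ Ha), (is_derive_unique _ _ _ Hb). ring. }
  assert (B : forall t, 0 <= t <= eps -> Rabs (rho1 t) <= eta * t).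
  { intros t Ht. destruct (Req_dec t 0) as [->|Ht0].
    - unfold rho1. rewrite Rplus_0_r, Rminus_0_r. replace (phi1 p - phi1 p - 2 * phi2 p * 0) with 0 by ring.
      rewrite Rabs_R0. lra.
    - destruct (MVT_gen phi1 (p - t) (p + t) phi2) as [c [Hc1 Hc2]].
      + intros x Hx. rewrite Rmin_left in Hx by lra. rewrite Rmax_right in Hx by lra. apply H2. lra.
      + intros x Hx. rewrite Rmin_left in Hx by lra. rewrite Rmax_right in Hx by lra.
        apply (deriv_cont _ _ (phi2 x)). apply H2. lra.
      + rewrite Rmin_left in Hc1 by lra. rewrite Rmax_right in Hc1 by lra.
        unfold rho1. rewrite Hc2.
        replace (phi2 c * (p + t - (p - t)) - 2 * phi2 p * t) with (2 * t * (phi2 c - phi2 p)) by ring.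
        rewrite Rabs_mult, Rabs_right by lra.
        assert (Rabs (phi2 c - phi2 p) < eta / 2).
        { apply Hd1'. apply Rabs_def1; lra. }
        nra. }
  destruct (MVT_gen rho 0 eps rho1) as [c [Hc1 Hc2]].
  - intros x Hx. rewrite Rmin_left in Hx by lra. rewrite Rmax_right in Hx by lra. apply Dr. lra.
  - intros x Hx. rewrite Rmin_left in Hx by lra. rewrite Rmax_right in Hx by lra.
    apply (deriv_cont _ _ (rho1 x)). apply Dr. lra.
  - rewrite Rmin_left in Hc1 by lra. rewrite Rmax_right in Hc1 by lra.
    assert (R0 : rho 0 = 0). { unfold rho. rewrite Rplus_0_r, Rminus_0_r. ring. }
    rewrite R0, Rminus_0_r in Hc2.
    change (Rabs (rho eps) <= eta * eps ^ 2). rewrite Hc2.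
    rewrite Rabs_mult, Rminus_0_r, (Rabs_right eps) by lra.
    assert (Hb := B c Hc1).
    apply Rle_trans with (eta * c * eps); [apply Rmult_le_compat_r; lra|].
    assert (eta * c <= eta * eps) by (apply Rmult_le_compat_l; lra). nra.
Qed.

Definition phi (al q : R) := exp (al * ln q + (1 - al) * ln (1 - q)).
Definition phi1 (al q : R) := phi al q * (al / q - (1 - al) / (1 - q)).
Definition phi2 (al q : R) := - (phi al q * (al * (1 - al)) / (q ^ 2 * (1 - q) ^ 2)).

Lemma phi_d al q : 0 < q < 1 -> is_derive (phi al) q (phi1 al q).
Proof.
  intros Hq. unfold phi1, phi. auto_derive.
  - lra.
  - replace (1 + - q) with (1 - q) by ring. field. lra.
Qed.

Lemma phi1_d al q : 0 < q < 1 -> is_derive (phi1 al) q (phi2 al q).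
Proof.
  intros Hq. unfold phi2, phi1, phi. auto_derive.
  - repeat split; lra.
  - replace (1 + - q) with (1 - q) by ring. field. lra.
Qed.

Lemma phi2_cont al p : 0 < p < 1 ->
  forall e, 0 < e -> exists d, 0 < d /\ forall t, Rabs (t - p) < d -> Rabs (phi2 al t - phi2 al p) < e.
Proof.
  intros Hp e He.
  assert (C : continuity_pt (phi2 al) p).
  { apply continuity_pt_filterlim. apply (@ex_derive_continuous R_AbsRing R_NormedModule).
    unfold phi2, phi. auto_derive. repeat split; try lra. assert (0 < p * (p * 1) * ((1 + - p) * ((1 + - p) * 1))) by (apply Rmult_lt_0_compat; apply Rmult_lt_0_compat; lra). lra. }
  destruct (C e He) as [d [Hd Hd']].
  exists d. split; [exact Hd|]. intros t Ht.
  destruct (Req_dec t p) as [->|Hne].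
  - rewrite Rminus_diag, Rabs_R0. exact He.
  - apply (Hd' t). split; [split; [exact I| auto] | exact Ht].
Qed.

Definition xI al f Ra I := exp (-(Ra * (I - premium al f I))).
Definition yI al f w Ra I := exp (-(Ra * (w - premium al f I))).
Definition Dq al f w Ra q J :=
  - (Ra * (1 - al) * q * xI al f Ra J) + Ra * al * (1 - q) * yI al f w Ra J.

Lemma Uins_eq al f w Ra q I :
  Uins al f w Ra q I = 1 - q * xI al f Ra I - (1 - q) * yI al f w Ra I.
Proof. reflexivity. Qed.

Lemma xI_shift al f Ra I J :
  xI al f Ra I = xI al f Ra J * exp (-(Ra * (1 - al) * (I - J))).
Proof. unfold xI. rewrite <- exp_plus. f_equal. unfold premium. ring. Qed.

Lemma yI_shift al f w Ra I J :
  yI al f w Ra I = yI al f w Ra J * exp (Ra * al * (I - J)).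
Proof. unfold yI. rewrite <- exp_plus. f_equal. unfold premium. ring. Qed.

Lemma tangent al f w Ra q I J : 0 <= q <= 1 ->
  Uins al f w Ra q I <= Uins al f w Ra q J - Dq al f w Ra q J * (I - J).
Proof.
  intros Hq. rewrite !Uins_eq. unfold Dq.
  rewrite (xI_shift al f Ra I J), (yI_shift al f w Ra I J).
  assert (X := exp_ineq1_le (-(Ra * (1 - al) * (I - J)))).
  assert (Y := exp_ineq1_le (Ra * al * (I - J))).
  assert (Px : 0 < xI al f Ra J) by apply exp_pos.
  assert (Py : 0 < yI al f w Ra J) by apply exp_pos.
  assert (A1 : q * xI al f Ra J * (1 + - (Ra * (1 - al) * (I - J))) <=
               q * xI al f Ra J * exp (- (Ra * (1 - al) * (I - J)))).
  { apply Rmult_le_compat_l; [apply Rmult_le_pos; lra | lra]. }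
  assert (A2 : (1 - q) * yI al f w Ra J * (1 + Ra * al * (I - J)) <=
               (1 - q) * yI al f w Ra J * exp (Ra * al * (I - J))).
  { apply Rmult_le_compat_l; [apply Rmult_le_pos; lra | lra]. }
  lra.
Qed.

Lemma tangent_strict al f w Ra q I J : 0 <= q < 1 -> 0 < al -> 0 < Ra -> J < I ->
  Uins al f w Ra q I < Uins al f w Ra q J - Dq al f w Ra q J * (I - J).
Proof.
  intros Hq Hal HRa HIJ. rewrite !Uins_eq. unfold Dq.
  rewrite (xI_shift al f Ra I J), (yI_shift al f w Ra I J).
  assert (X := exp_ineq1_le (-(Ra * (1 - al) * (I - J)))).
  assert (Y := exp_ineq1 (Ra * al * (I - J))).
  assert (Hn : Ra * al * (I - J) <> 0).
  { apply Rgt_not_eq. apply Rmult_lt_0_compat; [apply Rmult_lt_0_compat|]; lra. }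
  specialize (Y Hn).
  assert (Px : 0 < xI al f Ra J) by apply exp_pos.
  assert (Py : 0 < yI al f w Ra J) by apply exp_pos.
  assert (A1 : q * xI al f Ra J * (1 + - (Ra * (1 - al) * (I - J))) <=
               q * xI al f Ra J * exp (- (Ra * (1 - al) * (I - J)))).
  { apply Rmult_le_compat_l; [apply Rmult_le_pos; lra | lra]. }
  assert (A2 : (1 - q) * yI al f w Ra J * (1 + Ra * al * (I - J)) <
               (1 - q) * yI al f w Ra J * exp (Ra * al * (I - J))).
  { apply Rmult_lt_compat_l; [apply Rmult_lt_0_compat; lra | lra]. }
  lra.
Qed.

Lemma lub_eq (S : R -> Prop) m M : is_lub S m -> S M -> (forall y, S y -> y <= M) -> m = M.
Proof.
  intros [H1 H2] HM HU. apply Rle_antisym.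
  - apply H2. intros y Hy. apply HU, Hy.
  - apply H1, HM.
Qed.

Lemma lub_ge (S : R -> Prop) m y : is_lub S m -> S y -> y <= m.
Proof. intros [H1 _] Hy. apply H1, Hy. Qed.

Lemma U0_aff w Ra q1 q2 t :
  U0 w Ra ((1 - t) * q1 + t * q2) = (1 - t) * U0 w Ra q1 + t * U0 w Ra q2.
Proof. unfold U0. ring. Qed.

Lemma Uins_aff al f w Ra q1 q2 t I :
  Uins al f w Ra ((1 - t) * q1 + t * q2) I = (1 - t) * Uins al f w Ra q1 I + t * Uins al f w Ra q2 I.
Proof. unfold Uins. ring. Qed.

Lemma v_convex al f w Ra v q1 q2 t : is_value_function al f w Ra v ->
  0 <= q1 <= 1 -> 0 <= q2 <= 1 -> 0 <= t <= 1 ->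
  v ((1 - t) * q1 + t * q2) <= (1 - t) * v q1 + t * v q2.
Proof.
  intros Hv H1 H2 Ht.
  assert (Hq : 0 <= (1 - t) * q1 + t * q2 <= 1) by nra.
  destruct (Hv _ Hq) as [_ Hl]. apply Hl.
  destruct (Hv _ H1) as [U1 _]. destruct (Hv _ H2) as [U2 _].
  intros y [Hy | [I [HI Hy]]]; subst y.
  - rewrite U0_aff.
    assert (a1 := U1 _ (or_introl eq_refl)). assert (a2 := U2 _ (or_introl eq_refl)).
    apply Rplus_le_compat; apply Rmult_le_compat_l; lra.
  - rewrite Uins_aff.
    assert (a1 : Uins al f w Ra q1 I <= v q1) by (apply U1; right; exists I; auto).
    assert (a2 : Uins al f w Ra q2 I <= v q2) by (apply U2; right; exists I; auto).
    apply Rplus_le_compat; apply Rmult_le_compat_l; lra.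
Qed.

Lemma v_U0 al f w Ra v q : is_value_function al f w Ra v -> 0 <= q <= 1 ->
  (forall I, 0 <= I -> Uins al f w Ra q I <= U0 w Ra q) -> v q = U0 w Ra q.
Proof.
  intros Hv Hq H. apply (lub_eq _ _ _ (Hv q Hq)); [left; reflexivity|].
  intros y [-> | [I [HI ->]]]; [lra | apply H, HI].
Qed.

Lemma v_ge_U0 al f w Ra v q : is_value_function al f w Ra v -> 0 <= q <= 1 -> U0 w Ra q <= v q.
Proof. intros Hv Hq. apply (lub_ge _ _ _ (Hv q Hq)). left; reflexivity. Qed.

Lemma v_ge_Uins al f w Ra v q I : is_value_function al f w Ra v -> 0 <= q <= 1 -> 0 <= I ->
  Uins al f w Ra q I <= v q.
Proof. intros Hv Hq HI. apply (lub_ge _ _ _ (Hv q Hq)). right; exists I; auto. Qed.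

Definition cc al f w Ra := Ra * (1 - al) * xI al f Ra 0 / (Ra * al * yI al f w Ra 0).
Definition Istar al f w Ra q := (ln (cc al f w Ra) + ln q - ln (1 - q)) / Ra.
Definition KK al f w Ra := xI al f Ra 0 * exp (- (1 - al) * ln (cc al f w Ra)) / al.

Lemma star_props al f w Ra q : 0 < q < 1 -> 0 < al < 1 -> 0 < Ra -> Dq al f w Ra q 0 < 0 ->
  0 < Istar al f w Ra q /\ Dq al f w Ra q (Istar al f w Ra q) = 0 /\
  Uins al f w Ra q (Istar al f w Ra q) = 1 - KK al f w Ra * phi al q.
Proof.
  intros Hq Hal HRa HD.
  set (x0 := xI al f Ra 0). set (y0 := yI al f w Ra 0).
  assert (Px : 0 < x0) by apply exp_pos. assert (Py : 0 < y0) by apply exp_pos.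
  set (c := cc al f w Ra).
  assert (Pc : 0 < c).
  { unfold c, cc. apply Rdiv_lt_0_compat; repeat apply Rmult_lt_0_compat; fold x0 y0; lra. }
  set (I := Istar al f w Ra q).
  assert (ERa : exp (Ra * I) = c * q / (1 - q)).
  { unfold I, Istar. fold c. replace (Ra * ((ln c + ln q - ln (1 - q)) / Ra)) with
      (ln c + ln q + - ln (1 - q)) by (field; lra).
    rewrite !exp_plus, exp_Ropp, !exp_ln by lra. field. lra. }
  assert (Hc : Ra * al * y0 * c = Ra * (1 - al) * x0).
  { unfold c, cc. fold x0 y0. field. split; [lra|]. split; lra. }
  unfold Dq in HD. fold x0 y0 in HD.
  set (E1 := exp (-(Ra * (1 - al) * (I - 0)))).
  assert (HE2 : exp (Ra * al * (I - 0)) = c * q / (1 - q) * E1).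
  { unfold E1. rewrite <- ERa, <- exp_plus. f_equal. ring. }
  assert (Hx : xI al f Ra I = x0 * E1) by (unfold x0, E1; apply xI_shift).
  assert (Hy : yI al f w Ra I = y0 * (c * q / (1 - q) * E1)) by (unfold y0; rewrite <- HE2; apply yI_shift).
  split; [|split].
  - assert (c * q / (1 - q) > 1).
    { apply (Rmult_lt_reg_r (Ra * al * y0 * (1 - q))).
      { repeat apply Rmult_lt_0_compat; lra. }
      replace (c * q / (1 - q) * (Ra * al * y0 * (1 - q))) with (Ra * al * y0 * c * q) by (field; lra).
      rewrite Hc. lra. }
    assert (0 < Ra * I); [|nra].
    destruct (Rle_or_lt (Ra * I) 0) as [Hle|]; [|lra].
    assert (exp (Ra * I) <= 1); [|lra].
    rewrite <- exp_0. destruct Hle as [Hlt| ->]; [apply Rlt_le, exp_increasing, Hlt | lra].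
  - unfold Dq. rewrite Hx, Hy.
    replace (Ra * al * (1 - q) * (y0 * (c * q / (1 - q) * E1))) with (Ra * al * y0 * c * q * E1) by (field; lra).
    rewrite Hc. ring.
  - rewrite Uins_eq, Hx, Hy.
    replace ((1 - q) * (y0 * (c * q / (1 - q) * E1))) with (y0 * c * q * E1) by (field; lra).
    assert (Hyc : y0 * c = (1 - al) * x0 / al) by (apply (Rmult_eq_reg_l (Ra * al)); [|nra]; rewrite <- Rmult_assoc, Hc; field; lra).
    rewrite Hyc.
    assert (HqE : q * E1 = exp (- (1 - al) * ln c) * phi al q).
    { unfold E1, phi, I, Istar. fold c. rewrite <- (exp_ln q) at 1 by lra.
      rewrite <- !exp_plus. f_equal. field. lra. }
    unfold KK. fold x0 c.
    replace (1 - q * (x0 * E1) - (1 - al) * x0 / al * q * E1) with (1 - (q * E1) * x0 / al) by (field; lra).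
    rewrite HqE. field. lra.
Qed.

Lemma part1 al f w Ra v pstar p : is_value_function al f w Ra v ->
  is_threshold al f w Ra pstar -> 0 < p < 1 -> p < pstar ->
  exists delta, 0 < delta /\ forall eps, 0 < eps < delta -> VoI v p eps = 0.
Proof.
  intros Hv [Hps [T2 _]] Hp Hlt.
  exists (Rmin p (pstar - p)). split; [apply Rmin_pos; lra|].
  intros eps [E1 E2].
  assert (e1 := Rmin_l p (pstar - p)). assert (e2 := Rmin_r p (pstar - p)).
  unfold VoI.
  rewrite (v_U0 al f w Ra v (p + eps)), (v_U0 al f w Ra v (p - eps)), (v_U0 al f w Ra v p);
    try assumption; try lra; try (apply T2; lra).
  unfold U0. field.
Qed.

Lemma part2 al f w Ra v pstar : 0 < Ra -> 0 < al -> 0 < f -> is_value_function al f w Ra v ->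
  is_threshold al f w Ra pstar ->
  exists C, 0 < C /\ asymp_equiv_0plus (fun eps => VoI v pstar eps) (fun eps => C * eps).
Proof.
  intros HRa Hal Hf Hv [Hps [T2 [[I0 [HI0 [Heq Hopt]]] T4]]].
  set (g := fun q => v q - U0 w Ra q).
  assert (Vp : v pstar = U0 w Ra pstar) by (apply (v_U0 al f w Ra); auto; lra).
  set (D0 := (1 - xI al f Ra I0) + (yI al f w Ra I0 - exp (-(Ra * w)))).
  assert (Hid : forall q, Uins al f w Ra q I0 - U0 w Ra q =
     q * (1 - xI al f Ra I0) - (1 - q) * (yI al f w Ra I0 - exp (-(Ra * w)))).
  { intro q. unfold Uins, U0, xI, yI. ring. }
  assert (Ey : exp (-(Ra * w)) < yI al f w Ra I0).
  { unfold yI. apply exp_increasing. unfold premium.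
    assert (0 < Ra * (al * I0 + f)) by (apply Rmult_lt_0_compat; nra). nra. }
  assert (Hp0 := Hid pstar). rewrite Heq, Rminus_diag in Hp0.
  assert (HD0 : 0 < D0).
  { unfold D0. assert (0 < (1 - pstar) * (yI al f w Ra I0 - exp (- (Ra * w)))) by
      (apply Rmult_lt_0_compat; lra).
    assert (0 < pstar * (1 - xI al f Ra I0)) by lra.
    assert (0 < 1 - xI al f Ra I0).
    { destruct (Rle_or_lt (1 - xI al f Ra I0) 0); [|lra]. nra. }
    lra. }
  set (d0 := 1 - pstar).
  set (G := fun d => g (pstar + d) / d).
  assert (Glow : forall d, 0 < d < d0 -> D0 <= G d).
  { intros d Hd. unfold G, g. apply (Rmult_le_reg_r d); [lra|].
    unfold Rdiv. rewrite Rmult_assoc, Rinv_l, Rmult_1_r by lra.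
    assert (Uins al f w Ra (pstar + d) I0 <= v (pstar + d)) by
      (apply v_ge_Uins; [exact Hv | unfold d0 in Hd; lra | lra]).
    assert (Hq := Hid (pstar + d)). unfold D0. nra. }
  assert (Gmono : forall e d, 0 < e <= d -> d < d0 -> G e <= G d).
  { intros e d He Hd. unfold d0 in Hd.
    assert (Hc := v_convex al f w Ra v pstar (pstar + d) (e / d) Hv ltac:(lra) ltac:(lra)).
    assert (0 <= e / d <= 1).
    { split. apply Rlt_le, Rdiv_lt_0_compat; lra.
      apply (Rmult_le_reg_r d); [lra|]. unfold Rdiv. rewrite Rmult_assoc, Rinv_l by lra. lra. }
    specialize (Hc H).
    replace ((1 - e / d) * pstar + e / d * (pstar + d)) with (pstar + e) in Hc by (field; lra).
    assert (Hu := U0_aff w Ra pstar (pstar + d) (e / d)).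
    replace ((1 - e / d) * pstar + e / d * (pstar + d)) with (pstar + e) in Hu by (field; lra).
    unfold G, g.
    assert (v (pstar + e) - U0 w Ra (pstar + e) <= e / d * (v (pstar + d) - U0 w Ra (pstar + d))) by nra.
    apply (Rmult_le_reg_r e); [lra|]. unfold Rdiv at 1. rewrite Rmult_assoc, Rinv_l, Rmult_1_r by lra.
    replace ((v (pstar + d) - U0 w Ra (pstar + d)) / d * e) with (e / d * (v (pstar + d) - U0 w Ra (pstar + d))) by (field; lra).
    exact H0. }
  set (S := fun y => exists d, 0 < d < d0 /\ y = - G d).
  assert (Sb : bound S).
  { exists (- D0). intros y [d [Hd ->]]. assert (Hh := Glow d Hd). lra. }
  assert (Sne : exists y, S y).
  { exists (- G (d0 / 2)). exists (d0 / 2). split; [unfold d0; lra | reflexivity]. }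
  destruct (completeness S Sb Sne) as [m [Hm1 Hm2]].
  set (L := - m).
  assert (HL : D0 <= L).
  { unfold L. assert (m <= - D0); [|lra]. apply Hm2. intros y [d [Hd ->]].
    assert (Hh := Glow d Hd). lra. }
  assert (GL : forall d, 0 < d < d0 -> L <= G d).
  { intros d Hd. assert (- G d <= m) by (apply Hm1; exists d; auto). unfold L; lra. }
  assert (Gapp : forall e, 0 < e -> exists d, 0 < d < d0 /\ G d < L + e).
  { intros e He. apply NNPP. intro Hn.
    assert (m <= - L - e); [|unfold L in *; lra].
    apply Hm2. intros y [d [Hd ->]].
    destruct (Rlt_or_le (G d) (L + e)) as [Hlt|Hle]; [exfalso; apply Hn; exists d; auto | lra]. }
  exists (L / 2). split; [lra|].
  intros eta Heta.
  destruct (Gapp (L * eta / 2)) as [d1 [Hd1 Hd1']].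
  { apply Rmult_lt_0_compat; [|lra]. apply Rmult_lt_0_compat; lra. }
  exists (Rmin d1 pstar). split; [apply Rmin_pos; lra|].
  intros eps [E1 E2].
  assert (e1 := Rmin_l d1 pstar). assert (e2 := Rmin_r d1 pstar).
  assert (Vm : v (pstar - eps) = U0 w Ra (pstar - eps)) by (apply (v_U0 al f w Ra); auto; try lra; apply T2; lra).
  assert (Hvoi : VoI v pstar eps = / 2 * G eps * eps).
  { unfold VoI, G, g. rewrite Vm, Vp. field_simplify; [|lra]. unfold U0. field. }
  rewrite Hvoi.
  replace (/ 2 * G eps * eps / (L / 2 * eps) - 1) with ((G eps - L) / L) by (field; lra).
  assert (a1 := GL eps ltac:(lra)). assert (a2 := Gmono eps d1 ltac:(lra) ltac:(lra)).
  rewrite Rabs_right.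
  - apply (Rmult_lt_reg_r L); [lra|]. unfold Rdiv. rewrite Rmult_assoc, Rinv_l, Rmult_1_r by lra. nra.
  - apply Rle_ge. apply Rmult_le_pos; [lra|]. apply Rlt_le, Rinv_0_lt_compat; lra.
Qed.

Lemma part3 al f w Ra v pstar p : 0 < al < 1 -> 0 < Ra -> is_value_function al f w Ra v ->
  is_threshold al f w Ra pstar -> 0 < p < 1 -> pstar < p ->
  exists C, 0 < C /\ asymp_equiv_0plus (fun eps => VoI v p eps) (fun eps => C * eps ^ 2).
Proof.
  intros Hal HRa Hv [Hps [T2 [T3 T4]]] Hp Hlt.
  destruct (T4 p ltac:(lra)) as [Ih [HIh [HU0 Hopt]]].
  set (x0 := xI al f Ra 0). set (y0 := yI al f w Ra 0).
  assert (Px : 0 < x0) by apply exp_pos. assert (Py : 0 < y0) by apply exp_pos.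
  assert (HD : Dq al f w Ra p 0 < 0).
  { destruct (Rlt_or_le (Dq al f w Ra p 0) 0) as [|Hge]; [assumption|exfalso].
    assert (Hs := tangent_strict al f w Ra p Ih 0 ltac:(lra) ltac:(lra) HRa HIh).
    assert (Ho := Hopt 0 (Rle_refl 0)).
    assert (0 <= Dq al f w Ra p 0 * (Ih - 0)) by (apply Rmult_le_pos; lra). lra. }
  set (A := Ra * (1 - al) * x0 + Ra * al * y0).
  assert (PA : 0 < A) by (unfold A; apply Rplus_lt_0_compat; repeat apply Rmult_lt_0_compat; lra).
  assert (Dlin : forall q, Dq al f w Ra q 0 = Dq al f w Ra p 0 - (q - p) * A).
  { intro q. unfold Dq, A. fold x0 y0. ring. }
  set (d3 := - Dq al f w Ra p 0 / A).
  assert (Pd3 : 0 < d3) by (unfold d3; apply Rdiv_lt_0_compat; lra).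
  set (d0 := Rmin (Rmin (p - pstar) (1 - p)) d3).
  assert (Pd0 : 0 < d0) by (unfold d0; repeat apply Rmin_pos; lra).
  assert (m1 : d0 <= p - pstar) by (unfold d0; eapply Rle_trans; [apply Rmin_l | apply Rmin_l]).
  assert (m2 : d0 <= 1 - p) by (unfold d0; eapply Rle_trans; [apply Rmin_l | apply Rmin_r]).
  assert (m3 : d0 <= d3) by (unfold d0; apply Rmin_r).
  set (K := KK al f w Ra).
  assert (Near : forall q, p - d0 < q < p + d0 -> v q = 1 - K * phi al q).
  { intros q Hq.
    assert (Hq1 : pstar < q < 1) by lra.
    assert (HDq : Dq al f w Ra q 0 < 0).
    { rewrite Dlin. assert (- d3 * A = Dq al f w Ra p 0) by (unfold d3; field; lra).
      assert (- d3 * A < (q - p) * A) by (apply Rmult_lt_compat_r; lra). lra. }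
    destruct (star_props al f w Ra q ltac:(lra) Hal HRa HDq) as [S1 [S2 S3]].
    unfold K; rewrite <- S3. apply (lub_eq _ _ _ (Hv q ltac:(lra))).
    - right. exists (Istar al f w Ra q). split; [lra | reflexivity].
    - assert (Tg : forall J, Uins al f w Ra q J <= Uins al f w Ra q (Istar al f w Ra q)).
      { intro J. assert (Ht := tangent al f w Ra q J (Istar al f w Ra q) ltac:(lra)).
        rewrite S2 in Ht. lra. }
      intros y [-> | [J [HJ ->]]]; [|apply Tg].
      destruct (T4 q Hq1) as [Iq [_ [Hq2 _]]]. specialize (Tg Iq). lra. }
  assert (PK : 0 < K).
  { unfold K, KK. apply Rdiv_lt_0_compat; [apply Rmult_lt_0_compat; [apply exp_pos|apply exp_pos]|lra]. }
  assert (Pphi2 : phi2 al p < 0).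
  { unfold phi2. assert (0 < phi al p) by apply exp_pos.
    assert (0 < p ^ 2 * (1 - p) ^ 2) by (apply Rmult_lt_0_compat; apply pow_lt; lra).
    assert (0 < phi al p * (al * (1 - al)) / (p ^ 2 * (1 - p) ^ 2)); [|lra].
    apply Rdiv_lt_0_compat; [apply Rmult_lt_0_compat; [lra | apply Rmult_lt_0_compat; lra] | lra]. }
  set (C := - (K / 2) * phi2 al p).
  assert (PC : 0 < C) by (unfold C; nra).
  exists C. split; [exact PC|].
  intros eta Heta.
  set (r := Rmin p (1 - p)).
  assert (Pr : 0 < r) by (unfold r; apply Rmin_pos; lra).
  assert (r1 : r <= p) by apply Rmin_l. assert (r2 : r <= 1 - p) by apply Rmin_r.
  destruct (second_diff (phi al) (phi1 al) (phi2 al) p r Pr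
     ltac:(intros t Ht; apply phi_d; lra) ltac:(intros t Ht; apply phi1_d; lra)
     (phi2_cont al p Hp) (eta * C / K)) as [d2 [Pd2 Hd2]].
  { apply Rdiv_lt_0_compat; [apply Rmult_lt_0_compat|]; lra. }
  exists (Rmin d0 d2). split; [apply Rmin_pos; lra|].
  intros eps [E1 E2].
  assert (e1 := Rmin_l d0 d2). assert (e2 := Rmin_r d0 d2).
  assert (Hvoi : VoI v p eps = - (K / 2) * (phi al (p + eps) + phi al (p - eps) - 2 * phi al p)).
  { unfold VoI. rewrite (Near (p + eps)), (Near (p - eps)), (Near p) by lra. field. }
  assert (Hb := Hd2 eps ltac:(lra)).
  rewrite Hvoi.
  assert (Pe : 0 < eps ^ 2) by (apply pow_lt; lra).
  replace (- (K / 2) * (phi al (p + eps) + phi al (p - eps) - 2 * phi al p) / (C * eps ^ 2) - 1)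
    with (- ((K / 2) / (C * eps ^ 2)) *
          (phi al (p + eps) + phi al (p - eps) - 2 * phi al p - phi2 al p * eps ^ 2))
    by (unfold C; field; split; lra).
  rewrite Rabs_mult, Rabs_Ropp, Rabs_right.
  2:{ apply Rle_ge, Rlt_le, Rdiv_lt_0_compat; [lra | apply Rmult_lt_0_compat; lra]. }
  apply Rle_lt_trans with ((K / 2) / (C * eps ^ 2) * (eta * C / K * eps ^ 2)).
  - apply Rmult_le_compat_l; [apply Rlt_le, Rdiv_lt_0_compat; [lra | apply Rmult_lt_0_compat; lra] | exact Hb].
  - replace ((K / 2) / (C * eps ^ 2) * (eta * C / K * eps ^ 2)) with (eta / 2) by (field; split; lra).
    lra.
Qed.

Theorem proposition4p2 (alpha f w Ra : R) (v : R -> R) (pstar p : R) :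
  0 < alpha < 1 -> 0 < f -> 0 < w -> 0 < Ra ->
  is_value_function alpha f w Ra v ->
  is_threshold alpha f w Ra pstar ->
  0 < p < 1 ->
  (p < pstar -> exists delta, 0 < delta /\
      forall eps, 0 < eps < delta -> VoI v p eps = 0) /\
  (p = pstar -> exists C, 0 < C /\
      asymp_equiv_0plus (fun eps => VoI v p eps) (fun eps => C * eps)) /\
  (pstar < p -> exists C, 0 < C /\
      asymp_equiv_0plus (fun eps => VoI v p eps) (fun eps => C * eps ^ 2)).
Proof.
  intros Hal Hf Hw HRa Hv Ht Hp. split; [|split].
  - intro H. exact (part1 alpha f w Ra v pstar p Hv Ht Hp H).
  - intros ->. apply (part2 alpha f w Ra v pstar); auto; lra.
  - intro H. exact (part3 alpha f w Ra v pstar p Hal HRa Hv Ht Hp H).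
Qed.
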